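(* Let $a$ be a real number with $a\ge 3$ and let $k\in\mathbb{N}$. Then $$\frac{2\cdot(2k)!}{\pi^{2k}(2^{2k}-1)}\,\frac{a^{2k}}{a^{2k}-1} < |B_{2k}|.$$
   Context: $B_n$ denotes the Bernoulli numbers, defined by $\frac{x}{e^x-1}=\sum_{n=0}^\infty B_n \frac{x^n}{n!}$ for $|x|<2\pi$. $\mathbb{N}=\{1,2,3,\dots\}$. *)

(* Defs.v *)
From Stdlib Require Import Reals Lra.
From Coquelicot Require Import Coquelicot.
Open Scope R_scope.

(* The generating function x / (e^x - 1), extended continuously (indeed
   analytically) at 0 by its limit value 1. *)
Definition bern_gen (x : R) : R :=
  if Req_EM_T x 0 then 1 else x / (exp x - 1).

(* Bernoulli numbers: x/(e^x-1) = sum_n B_n x^n / n!  for |x| < 2 pi,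
   i.e. B_n is n! times the n-th Taylor coefficient at 0, which is the
   n-th derivative of the generating function at 0. *)
Definition bernoulli (n : nat) : R := Derive_n bern_gen n 0.

(* Main.v *)
Require Import Defs.
From Stdlib Require Import Reals.
From Coquelicot Require Import Coquelicot.
Open Scope R_scope.
From Stdlib Require Import Lra Lia Factorial.
Notation fact := Factorial.fact.


Fixpoint ctab (n : nat) : nat -> R :=
  match n with
  | O => fun _ => 1
  | S n' => fun j => if Nat.leb j n' then ctab n' j
            else - sum_f_R0 (fun i => ctab n' i / INR (fact (S (S n') - i))) n'
  end.
Definition cc n := ctab n n.

Lemma ctab_stable n j : (j <= n)%nat -> ctab n j = cc j.
Proof.
  induction n as [|n IH]; intros H.
  - assert (j = 0%nat) by lia. subst. reflexivity.
  - destruct (Nat.eq_dec j (S n)) as [->|Hne]; [reflexivity|].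
    simpl. assert (Hl : Nat.leb j n = true) by (apply Nat.leb_le; lia).
    rewrite Hl. apply IH. lia.
Qed.

Lemma cc_0 : cc 0 = 1.
Proof. reflexivity. Qed.

Lemma cc_S n : cc (S n) = - sum_f_R0 (fun i => cc i / INR (fact (S (S n) - i))) n.
Proof.
  unfold cc at 1. change (ctab (S n) (S n)) with (if Nat.leb (S n) n then ctab n (S n) else - sum_f_R0 (fun i => ctab n i / INR (fact (S (S n) - i))) n). rewrite (proj2 (Nat.leb_gt (S n) n) ltac:(lia)).
  f_equal. apply sum_eq. intros i Hi. rewrite ctab_stable by lia. reflexivity.
Qed.

Lemma cc_rec m : (1 <= m)%nat ->
  sum_f_R0 (fun j => cc j / INR (fact (S m - j))) m = 0.
Proof.
  intros H. destruct m as [|n]; [lia|].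
  rewrite tech5. rewrite cc_S.
  replace (S (S n) - S n)%nat with 1%nat by lia. change (INR (fact 1)) with 1.
  rewrite Rdiv_1_r. ring.
Qed.

Lemma fact_ge_pow2 n : (2 ^ n <= fact (S n))%nat.
Proof.
  induction n; simpl in *; lia.
Qed.

Lemma sum_bound n : forall g : nat -> R, (forall i, Rabs (g i) <= 1) ->
  Rabs (sum_f_R0 (fun i => g i / INR (fact (S (S n) - i))) n) <= 1 - / 2 ^ (S n).
Proof.
  induction n as [|n IH]; intros g Hg.
  - simpl. specialize (Hg 0%nat). rewrite Rabs_div by lra.
    rewrite (Rabs_right (1+1)) by lra. lra.
  - rewrite decomp_sum by lia. simpl pred.
    assert (E: sum_f_R0 (fun i => g (S i) / INR (fact (S (S (S n)) - S i))) n
             = sum_f_R0 (fun i => g (S i) / INR (fact (S (S n) - i))) n).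
    { apply sum_eq. intros i Hi. f_equal. }
    rewrite E. eapply Rle_trans; [apply Rabs_triang|].
    specialize (IH (fun i => g (S i)) (fun i => Hg (S i))).
    assert (Hf: 2 ^ (S (S n)) <= INR (fact (S (S (S n)) - 0))).
    { replace (S (S (S n)) - 0)%nat with (S (S (S n))) by lia.
      replace (2 ^ S (S n)) with (INR (2 ^ S (S n))) by (rewrite pow_INR; f_equal; simpl; ring).
      apply le_INR. apply fact_ge_pow2. }
    assert (Hp: 0 < 2 ^ (S (S n))) by (apply pow_lt; lra).
    assert (Hd: Rabs (g 0%nat / INR (fact (S (S (S n)) - 0))) <= / 2 ^ (S (S n))).
    { unfold Rdiv. rewrite Rabs_mult. rewrite Rabs_inv. rewrite (Rabs_right (INR _)) by (apply Rle_ge, pos_INR).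
      replace (/ 2 ^ S (S n)) with (1 * / 2 ^ S (S n)) by ring.
      apply Rmult_le_compat; try apply Rabs_pos; try (left; apply Rinv_0_lt_compat; lra).
      apply Hg. apply Rinv_le_contravar; lra. }
    simpl pow in *. 
    assert (0 < 2 ^ n) by (apply pow_lt; lra).
    replace (/ (2 * (2 * 2 ^ n))) with (/ (2 * 2^n) / 2) in Hd by (field; lra).
    replace (/ (2 * (2 * 2 ^ n))) with (/ (2 * 2^n) / 2) by (field; lra).
    lra.
Qed.

Lemma cc_bound n : Rabs (cc n) <= 1.
Proof.
  induction n as [n IH] using (well_founded_induction Wf_nat.lt_wf).
  destruct n as [|n]. { rewrite cc_0, Rabs_R1. lra. }
  rewrite cc_S, Rabs_Ropp.
  set (g := fun i => if Nat.leb i n then cc i else 0).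
  assert (E: sum_f_R0 (fun i => cc i / INR (fact (S (S n) - i))) n
    = sum_f_R0 (fun i => g i / INR (fact (S (S n) - i))) n).
  { apply sum_eq. intros i Hi. unfold g. rewrite (proj2 (Nat.leb_le i n) Hi). reflexivity. }
  rewrite E. eapply Rle_trans; [apply sum_bound|].
  - intros i. unfold g. destruct (Nat.leb i n) eqn:Hi.
    + apply IH. apply Nat.leb_le in Hi. lia.
    + rewrite Rabs_R0. lra.
  - assert (0 < / 2 ^ S n) by (apply Rinv_0_lt_compat, pow_lt; lra). lra.
Qed.


Definition hc (n : nat) : R := / INR (fact (S n)).

Lemma CV_ge1 a : (forall n, Rabs (a n) <= 1) -> Rbar_le 1 (CV_radius a).
Proof.
  intros H. destruct (CV_radius_bounded a) as [Hub _]. apply Hub.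
  exists 1. intros n. rewrite pow1, Rmult_1_r. auto.
Qed.

Lemma lt_CV a x : (forall n, Rabs (a n) <= 1) -> Rabs x < 1 -> Rbar_lt (Rabs x) (CV_radius a).
Proof.
  intros H Hx. generalize (CV_ge1 a H). destruct (CV_radius a); simpl; lra.
Qed.

Lemma hc_bound n : Rabs (hc n) <= 1.
Proof.
  unfold hc. assert (H := lt_O_fact (S n)). apply lt_INR in H. simpl in H.
  assert (H1 : 1 <= INR (fact (S n))) by (apply (le_INR 1); apply lt_O_fact).
  rewrite Rabs_right.
  - rewrite <- Rinv_1. apply Rinv_le_contravar; lra.
  - left. apply Rinv_0_lt_compat. lra.
Qed.

Lemma PS_mult_cc_hc n : PS_mult cc hc n = if Nat.eqb n 0 then 1 else 0.
Proof.
  destruct n as [|m].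
  - unfold PS_mult, hc. simpl. rewrite cc_0. field.
  - simpl. rewrite <- (cc_rec (S m)) by lia. unfold PS_mult. apply sum_eq.
    intros i Hi. unfold hc. unfold Rdiv. f_equal. f_equal. f_equal. f_equal. lia.
Qed.

Lemma key x : Rabs x < 1 -> bern_gen x = PSeries cc x.
Proof.
  intros Hx. unfold bern_gen. destruct (Req_EM_T x 0) as [->|Hx0].
  - rewrite PSeries_0. rewrite cc_0. reflexivity.
  - assert (Hc := lt_CV cc x cc_bound Hx).
    assert (Hh := lt_CV hc x hc_bound Hx).
    assert (Hm := PSeries_mult cc hc x Hc Hh).
    assert (Hone : PSeries (PS_mult cc hc) x = 1).
    { rewrite PSeries_decr_1 by (apply ex_pseries_mult; auto).
      rewrite (PSeries_ext (PS_decr_1 (PS_mult cc hc)) (fun _ => 0)).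
      - rewrite PSeries_const_0, PS_mult_cc_hc. simpl. ring.
      - intros n. unfold PS_decr_1. rewrite PS_mult_cc_hc. reflexivity. }
    assert (He : PSeries hc x = (exp x - 1) / x).
    { assert (Hxy : mult (/ x) x = one) by (apply Rinv_l; auto).
      assert (H := is_pseries_decr_1 _ x (/x) _ Hxy (is_exp_Reals x)).
      apply is_pseries_unique in H.
      transitivity (PSeries (PS_decr_1 (fun n => / INR (fact n))) x).
      { apply PSeries_ext. intros n. reflexivity. }
      rewrite H. simpl. change (/ x * (exp x + - / 1) = (exp x - 1) / x). field. auto. }
    assert (Hne : exp x - 1 <> 0).
    { intros E. apply Hx0. apply exp_inv. rewrite exp_0. lra. }
    rewrite He, Hone in Hm.
    assert (E: PSeries cc x = x / (exp x - 1)).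
    { apply (Rmult_eq_reg_r ((exp x - 1) / x)). rewrite <- Hm. field. split; auto.
      apply Rmult_integral_contrapositive; split; auto. apply Rinv_neq_0_compat; auto. }
    rewrite E. reflexivity.
Qed.

Lemma bernoulli_cc n : bernoulli n = INR (fact n) * cc n.
Proof.
  unfold bernoulli.
  rewrite (Derive_n_ext_loc _ (PSeries cc)).
  - rewrite Derive_n_PSeries.
    + rewrite PSeries_0. unfold PS_derive_n. simpl. rewrite Rdiv_1_r. reflexivity.
    + apply lt_CV. apply cc_bound. rewrite Rabs_R0. lra.
  - exists (mkposreal 1 Rlt_0_1). intros y Hy. apply key.
    unfold ball in Hy; simpl in Hy; unfold AbsRing_ball, abs, minus, plus, opp in Hy; simpl in Hy.
    rewrite Ropp_0, Rplus_0_r in Hy. exact Hy.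
Qed.


Definition Q (n : nat) (x : R) : R :=
  sum_f_R0 (fun i => cc (n - i) * x ^ i / INR (fact i)) n.

Lemma is_derive_sum (f df : nat -> R -> R) N x :
  (forall i, (i <= N)%nat -> is_derive (f i) x (df i x)) ->
  is_derive (fun y => sum_f_R0 (fun i => f i y) N) x (sum_f_R0 (fun i => df i x) N).
Proof.
  induction N as [|N IH]; intros H.
  - simpl. apply H. lia.
  - simpl. apply (is_derive_plus (fun y => sum_f_R0 (fun i => f i y) N) (f (S N))).
    + apply IH. intros; apply H; lia.
    + apply H; lia.
Qed.

Lemma sum_rev (f : nat -> R) N : sum_f_R0 (fun i => f (N - i)%nat) N = sum_f_R0 f N.
Proof.
  induction N as [|N IH].
  - reflexivity.
  - rewrite decomp_sum by lia. simpl pred. rewrite tech5.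
    replace (S N - 0)%nat with (S N) by lia.
    rewrite <- IH. rewrite Rplus_comm. f_equal.
Qed.

Lemma Q_0 x : Q 0 x = 1.
Proof. unfold Q. simpl. rewrite cc_0. field. Qed.

Lemma Q_at0 n : Q n 0 = cc n.
Proof.
  unfold Q. destruct n as [|n].
  - simpl. field.
  - rewrite decomp_sum by lia. simpl pred. rewrite Nat.sub_0_r.
    rewrite sum_eq_R0.
    + simpl. field.
    + intros i Hi. rewrite pow_i by lia. unfold Rdiv. ring.
Qed.

Lemma Q_derive n x : is_derive (Q (S n)) x (Q n x).
Proof.
  unfold Q.
  assert (E : forall y, sum_f_R0 (fun i => cc (S n - i) * y ^ i / INR (fact i)) (S n)
     = cc (S n) + sum_f_R0 (fun i => cc (n - i) * y ^ (S i) / INR (fact (S i))) n).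
  { intros y. rewrite decomp_sum by lia. simpl pred. replace (cc (S n - 0) * y^0 / INR (fact 0)) with (cc (S n)) by (simpl; field). reflexivity. }
  apply (is_derive_ext (fun y => cc (S n) + sum_f_R0 (fun i => cc (n - i) * y ^ (S i) / INR (fact (S i))) n)).
  { intros y. rewrite E. reflexivity. }
  replace (sum_f_R0 (fun i => cc (n - i) * x ^ i / INR (fact i)) n)
    with (0 + sum_f_R0 (fun i => cc (n - i) * x ^ i / INR (fact i)) n) by ring.
  apply (is_derive_plus (fun _ => cc (S n))).
  - auto_derive; [exact I | reflexivity].
  - apply (is_derive_sum (fun i y => cc (n - i) * y ^ (S i) / INR (fact (S i)))
                         (fun i y => cc (n - i) * y ^ i / INR (fact i))).
    intros i Hi. auto_derive; [trivial|].
    assert (Hf: 0 < INR (fact i)) by (apply lt_0_INR, lt_O_fact).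
    rewrite plus_INR, mult_INR. revert Hf. generalize (fact i). intros F Hf.
    destruct i as [|i]; simpl; [field; lra|].
    change (match i with | 0%nat => 1 | S _ => INR i + 1 end) with (INR (S i)).
    assert (0 <= INR (S i)) by apply pos_INR.
    field. split; apply Rgt_not_eq; nra.
Qed.

Lemma Q_ex_derive n x : ex_derive (Q n) x.
Proof.
  destruct n as [|n].
  - exists 0. apply (is_derive_ext (fun _ => 1)). { intros; rewrite Q_0; reflexivity. }
    auto_derive; [exact I | reflexivity].
  - exists (Q n x). apply Q_derive.
Qed.

Lemma Q_cont n x : continuous (Q n) x.
Proof. apply (@ex_derive_continuous R_AbsRing R_NormedModule), Q_ex_derive. Qed.

Lemma Q_at1 n : (2 <= n)%nat -> Q n 1 = cc n.
Proof.
  intros H. destruct n as [|n]; [lia|].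
  unfold Q. rewrite decomp_sum by lia. simpl pred. rewrite Nat.sub_0_r.
  replace (cc (S n) * 1 ^ 0 / INR (fact 0)) with (cc (S n)) by (simpl; field).
  rewrite <- (Rplus_0_r (cc (S n))) at 2. f_equal.
  rewrite <- (cc_rec n) by lia.
  rewrite <- (sum_rev (fun j => cc j / INR (fact (S n - j)))).
  apply sum_eq. intros i Hi. rewrite pow1.
  replace (S n - (n - i))%nat with (S i) by lia.
  replace (S n - S i)%nat with (n - i)%nat by lia. field.
  apply not_0_INR, fact_neq_0.
Qed.

Lemma Q1_diff : Q 1 1 - Q 1 0 = 1.
Proof. unfold Q. simpl. rewrite cc_0. field. Qed.

Lemma Q_diff n : Q n 1 - Q n 0 = if Nat.eqb n 1 then 1 else 0.
Proof.
  destruct (Nat.eqb_spec n 1) as [->|Hn]. apply Q1_diff.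
  destruct n as [|[|n]].
  - rewrite !Q_0. ring.
  - lia.
  - rewrite Q_at1, Q_at0 by lia. ring.
Qed.


Lemma RI_lin (f g : R -> R) (a b I J c d : R) : is_RInt f a b I -> is_RInt g a b J ->
  is_RInt (fun x => c * f x + d * g x) a b (c * I + d * J).
Proof.
  intros H1 H2.
  exact (is_RInt_plus _ _ a b _ _ (is_RInt_scal f a b c I H1) (is_RInt_scal g a b d J H2)).
Qed.

Lemma RI_eq (f g : R -> R) (a b I J : R) : is_RInt f a b I -> (forall x, f x = g x) -> I = J ->
  is_RInt g a b J.
Proof.
  intros H E <-. apply (is_RInt_ext f). intros; auto. exact H.
Qed.

Lemma ibp (f f' g g' : R -> R) I :
  (forall x, is_derive f x (f' x)) -> (forall x, is_derive g x (g' x)) ->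
  (forall x, continuous f' x) -> (forall x, continuous g' x) ->
  is_RInt (fun x => f' x * g x) 0 1 I ->
  is_RInt (fun x => f x * g' x) 0 1 (f 1 * g 1 - f 0 * g 0 - I).
Proof.
  intros H1 H2 H3 H4 H5.
  exact (is_RInt_scal_derive_r f g f' g' 0 1 I (fun t _ => H1 t) (fun t _ => H2 t)
     (fun t _ => H3 t) (fun t _ => H4 t) H5).
Qed.

Lemma cont_cos w x : continuous (fun y => cos (w * y)) x.
Proof. apply (@ex_derive_continuous R_AbsRing R_NormedModule). auto_derive. exact I. Qed.
Lemma cont_sin w x : continuous (fun y => sin (w * y)) x.
Proof. apply (@ex_derive_continuous R_AbsRing R_NormedModule). auto_derive. exact I. Qed.

Definition wm (m : nat) := 2 * PI * INR m.
Lemma sin_wm m : sin (wm m) = 0.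
Proof. unfold wm. rewrite <- (Rplus_0_l (2 * PI * INR m)). replace (0 + 2 * PI * INR m) with (0 + 2 * INR m * PI) by ring. rewrite sin_period. apply sin_0. Qed.
Lemma cos_wm m : cos (wm m) = 1.
Proof. unfold wm. rewrite <- (Rplus_0_l (2 * PI * INR m)). replace (0 + 2 * PI * INR m) with (0 + 2 * INR m * PI) by ring. rewrite cos_period. apply cos_0. Qed.
Lemma wm_pos m : (1 <= m)%nat -> 0 < wm m.
Proof. intros H. unfold wm. apply (le_INR 1) in H. simpl in H. assert (0 < PI) by apply PI_RGT_0. nra. Qed.

Fixpoint CS (w : R) (k : nat) : R * R :=
  match k with
  | O => (0, 0)
  | S k' => (- snd (CS w k') / w, (fst (CS w k') - (Q (S k') 1 - Q (S k') 0)) / w)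
  end.

Lemma CS_int m k : (1 <= m)%nat ->
  is_RInt (fun x => Q k x * cos (wm m * x)) 0 1 (fst (CS (wm m) k)) /\
  is_RInt (fun x => Q k x * sin (wm m * x)) 0 1 (snd (CS (wm m) k)).
Proof.
  intros Hm. assert (Hw := wm_pos m Hm). set (w := wm m) in *.
  assert (Hs : sin w = 0) by apply sin_wm. assert (Hc : cos w = 1) by apply cos_wm.
  induction k as [|k [IH1 IH2]].
  - simpl. split.
    + apply (RI_eq (fun x => cos (w * x)) _ 0 1 (sin (w * 1) / w - sin (w * 0) / w)).
      * apply (is_RInt_derive (fun x => sin (w * x) / w) (fun x => cos (w * x))).
        -- intros x _. auto_derive; [exact I|]. field. lra.
        -- intros x _. apply cont_cos.
      * intros x. rewrite Q_0. ring.
      * rewrite Rmult_1_r, Rmult_0_r, Hs, sin_0. field. lra.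
    + apply (RI_eq (fun x => sin (w * x)) _ 0 1 (- cos (w * 1) / w - - cos (w * 0) / w)).
      * apply (is_RInt_derive (fun x => - cos (w * x) / w) (fun x => sin (w * x))).
        -- intros x _. auto_derive; [exact I|]. field. lra.
        -- intros x _. apply cont_sin.
      * intros x. rewrite Q_0. ring.
      * rewrite Rmult_1_r, Rmult_0_r, Hc, cos_0. field. lra.
  - simpl. split.
    + assert (H2 : is_RInt (fun x => Q k x * (sin (w * x) / w)) 0 1 (snd (CS w k) / w)).
      { apply (RI_eq (fun x => / w * (Q k x * sin (w * x))) _ 0 1 (/ w * snd (CS w k))).
        - exact (is_RInt_scal _ 0 1 (/ w) _ IH2).
        - intros x. field. lra.
        - field. lra. }
      assert (D : forall x, is_derive (fun x => sin (w * x) / w) x (cos (w * x))).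
      { intros x. auto_derive; [exact I|]. field. lra. }
      assert (H := ibp (Q (S k)) (Q k) (fun x => sin (w * x) / w) (fun x => cos (w * x)) _
                   (Q_derive k) D (Q_cont k) (cont_cos w) H2).
      apply (RI_eq _ _ 0 1 _ _ H). { intros; reflexivity. }
      rewrite Rmult_1_r, Rmult_0_r, Hs, sin_0. field. lra.
    + assert (H2 : is_RInt (fun x => Q k x * (- cos (w * x) / w)) 0 1 (- fst (CS w k) / w)).
      { apply (RI_eq (fun x => (- / w) * (Q k x * cos (w * x))) _ 0 1 (- / w * fst (CS w k))).
        - exact (is_RInt_scal _ 0 1 (- / w) _ IH1).
        - intros x. field. lra.
        - field. lra. }
      assert (D : forall x, is_derive (fun x => - cos (w * x) / w) x (sin (w * x))).
      { intros x. auto_derive; [exact I|]. field. lra. }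
      assert (H := ibp (Q (S k)) (Q k) (fun x => - cos (w * x) / w) (fun x => sin (w * x)) _
                   (Q_derive k) D (Q_cont k) (cont_sin w) H2).
      apply (RI_eq _ _ 0 1 _ _ H). { intros; reflexivity. }
      rewrite Rmult_1_r, Rmult_0_r, Hc, cos_0. field. lra.
Qed.

Lemma CS_norm w k : w <> 0 -> (1 <= k)%nat ->
  (fst (CS w k))^2 + (snd (CS w k))^2 = / w ^ (2 * k).
Proof.
  intros Hw Hk. induction k as [|k IH]; [lia|].
  destruct k as [|k].
  - simpl. rewrite Q1_diff. field. auto.
  - change (CS w (S (S k))) with
      (- snd (CS w (S k)) / w, (fst (CS w (S k)) - (Q (S (S k)) 1 - Q (S (S k)) 0)) / w).
    rewrite Q_diff. simpl Nat.eqb.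
    replace (2 * S (S k))%nat with (S (S (2 * S k))) by lia.
    remember (CS w (S k)) as p. destruct p as [c s]. simpl fst in *. simpl snd in *.
    transitivity ((c^2 + s^2) / w ^ 2).
    { field. auto. }
    rewrite IH by lia. assert (w ^ (2 * S k) <> 0) by (apply pow_nonzero; auto).
    simpl pow. field. split; auto. apply pow_nonzero; auto.
Qed.

Lemma int_Q n : is_RInt (fun x => Q (S n) x) 0 1 0.
Proof.
  apply (RI_eq (Q (S n)) (fun x => Q (S n) x) 0 1 (Q (S (S n)) 1 - Q (S (S n)) 0) 0).
  - apply (is_RInt_derive (Q (S (S n))) (Q (S n))).
    + intros x _. apply Q_derive.
    + intros x _. apply Q_cont.
  - intros; reflexivity.
  - rewrite Q_diff. reflexivity.
Qed.

Lemma QQ q : forall p, (1 <= p)%nat ->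
  is_RInt (fun x => Q (S q) x * Q p x) 0 1 ((-1) ^ q * cc (p + S q)).
Proof.
  induction q as [|q IH]; intros p Hp.
  - assert (H0 : is_RInt (fun x => Q 0 x * Q (S p) x) 0 1 0).
    { apply (RI_eq _ _ 0 1 _ _ (int_Q p)). intros x. rewrite Q_0. ring. reflexivity. }
    assert (H := ibp (Q 1) (Q 0) (Q (S p)) (Q p) _ (Q_derive 0) (Q_derive p) (Q_cont 0) (Q_cont p) H0).
    apply (RI_eq _ _ 0 1 _ _ H). { intros; reflexivity. }
    rewrite (Q_at1 (S p)) by lia. rewrite (Q_at0 (S p)).
    replace (p + 1)%nat with (S p) by lia.
    replace (Q 1 1 * cc (S p) - Q 1 0 * cc (S p) - 0) with ((Q 1 1 - Q 1 0) * cc (S p)) by ring.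
    rewrite Q1_diff. simpl. ring.
  - assert (H0 := IH (S p) ltac:(lia)).
    assert (H := ibp (Q (S (S q))) (Q (S q)) (Q (S p)) (Q p) _ (Q_derive (S q)) (Q_derive p)
                  (Q_cont (S q)) (Q_cont p) H0).
    apply (RI_eq _ _ 0 1 _ _ H). { intros; reflexivity. }
    rewrite (Q_at1 (S (S q))), (Q_at1 (S p)) by lia. rewrite (Q_at0 (S (S q))), (Q_at0 (S p)).
    replace (S p + S q)%nat with (p + S (S q))%nat by lia.
    simpl pow. ring.
Qed.


Lemma sq_ne a b : 0 < a -> 0 < b -> a <> b -> a * a - b * b <> 0.
Proof.
  intros Ha Hb Hab E. apply Hab.
  assert ((a - b) * (a + b) = 0) by (rewrite <- E; ring).
  apply Rmult_integral in H. destruct H; lra.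
Qed.

Lemma RI_der (F f : R -> R) (I : R) :
  (forall x, is_derive F x (f x)) -> (forall x, continuous f x) -> F 1 - F 0 = I ->
  is_RInt f 0 1 I.
Proof.
  intros H1 H2 H3. rewrite <- H3.
  apply (is_RInt_derive F f 0 1); intros x _; auto.
Qed.

Lemma cont_of_der (f : R -> R) x : ex_derive f x -> continuous f x.
Proof. apply (@ex_derive_continuous R_AbsRing R_NormedModule). Qed.

Lemma O1 a b : 0 < a -> 0 < b -> a <> b -> sin a = 0 -> sin b = 0 ->
  is_RInt (fun x => cos (a * x) * cos (b * x)) 0 1 0.
Proof.
  intros Ha Hb Hab Sa Sb. assert (D := sq_ne a b Ha Hb Hab).
  apply (RI_der (fun x => (a * sin (a * x) * cos (b * x) - b * cos (a * x) * sin (b * x)) / (a * a - b * b))).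
  - intro t. auto_derive; [exact I|]. field. auto.
  - intro t. apply cont_of_der. auto_derive. exact I.
  - rewrite !Rmult_1_r, !Rmult_0_r, Sa, Sb, sin_0. field. auto.
Qed.

Lemma O2 a b : 0 < a -> 0 < b -> a <> b -> sin a = 0 -> sin b = 0 ->
  is_RInt (fun x => sin (a * x) * sin (b * x)) 0 1 0.
Proof.
  intros Ha Hb Hab Sa Sb. assert (D := sq_ne a b Ha Hb Hab).
  apply (RI_der (fun x => (b * sin (a * x) * cos (b * x) - a * cos (a * x) * sin (b * x)) / (a * a - b * b))).
  - intro t. auto_derive; [exact I|]. field. auto.
  - intro t. apply cont_of_der. auto_derive. exact I.
  - rewrite !Rmult_1_r, !Rmult_0_r, Sa, Sb, sin_0. field. auto.
Qed.

Lemma O3 a b : 0 < a -> 0 < b -> a <> b -> sin a = 0 -> sin b = 0 -> cos a = 1 -> cos b = 1 ->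
  is_RInt (fun x => sin (a * x) * cos (b * x)) 0 1 0.
Proof.
  intros Ha Hb Hab Sa Sb Ca Cb. assert (D := sq_ne a b Ha Hb Hab).
  apply (RI_der (fun x => - (a * cos (a * x) * cos (b * x) + b * sin (a * x) * sin (b * x)) / (a * a - b * b))).
  - intro t. auto_derive; [exact I|]. field. auto.
  - intro t. apply cont_of_der. auto_derive. exact I.
  - rewrite !Rmult_1_r, !Rmult_0_r, Sa, Sb, Ca, Cb, sin_0, cos_0. field. auto.
Qed.

Lemma O4c a : 0 < a -> sin a = 0 -> is_RInt (fun x => cos (a * x) * cos (a * x)) 0 1 (1/2).
Proof.
  intros Ha Sa.
  apply (RI_der (fun x => x / 2 + sin (a * x) * cos (a * x) / (2 * a))).
  - intro t. auto_derive; [exact I|]. assert (P := sin2_cos2 (a * t)). unfold Rsqr in P.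
    assert (E: sin (a * t) ^ 2 = 1 - cos (a * t) ^ 2) by (simpl; lra).
    field_simplify; [|lra]. rewrite E. field. lra.
  - intro t. apply cont_of_der. auto_derive. exact I.
  - rewrite !Rmult_1_r, !Rmult_0_r, Sa, sin_0. field. lra.
Qed.

Lemma O4s a : 0 < a -> sin a = 0 -> is_RInt (fun x => sin (a * x) * sin (a * x)) 0 1 (1/2).
Proof.
  intros Ha Sa.
  apply (RI_der (fun x => x / 2 - sin (a * x) * cos (a * x) / (2 * a))).
  - intro t. auto_derive; [exact I|]. assert (P := sin2_cos2 (a * t)). unfold Rsqr in P.
    assert (E: cos (a * t) ^ 2 = 1 - sin (a * t) ^ 2) by (simpl; lra).
    field_simplify; [|lra]. rewrite E. field. lra.
  - intro t. apply cont_of_der. auto_derive. exact I.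
  - rewrite !Rmult_1_r, !Rmult_0_r, Sa, sin_0. field. lra.
Qed.

Lemma O4m a : 0 < a -> sin a = 0 -> is_RInt (fun x => sin (a * x) * cos (a * x)) 0 1 0.
Proof.
  intros Ha Sa.
  apply (RI_der (fun x => sin (a * x) * sin (a * x) / (2 * a))).
  - intro t. auto_derive; [exact I|]. field. lra.
  - intro t. apply cont_of_der. auto_derive. exact I.
  - rewrite !Rmult_1_r, !Rmult_0_r, Sa, sin_0. field. lra.
Qed.

Lemma lin4 (f1 f2 f3 f4 : R -> R) (I1 I2 I3 I4 c1 c2 c3 c4 : R) :
  is_RInt f1 0 1 I1 -> is_RInt f2 0 1 I2 -> is_RInt f3 0 1 I3 -> is_RInt f4 0 1 I4 ->
  is_RInt (fun x => c1 * f1 x + c2 * f2 x + c3 * f3 x + c4 * f4 x) 0 1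
    (c1 * I1 + c2 * I2 + c3 * I3 + c4 * I4).
Proof.
  intros H1 H2 H3 H4.
  assert (G := RI_lin _ _ 0 1 _ _ 1 1 (RI_lin _ _ 0 1 _ _ c1 c2 H1 H2) (RI_lin _ _ 0 1 _ _ c3 c4 H3 H4)).
  apply (RI_eq _ _ 0 1 _ _ G); intros; ring.
Qed.

Definition uf (w a b : nat -> R) (i : nat) (x : R) : R :=
  2 * (a i * cos (w i * x) + b i * sin (w i * x)).
Fixpoint Tn (w a b : nat -> R) (N : nat) (x : R) : R :=
  match N with O => 0 | S N' => Tn w a b N' x + uf w a b N' x end.
Fixpoint Sn (a b : nat -> R) (N : nat) : R :=
  match N with O => 0 | S N' => Sn a b N' + 2 * (a N' ^ 2 + b N' ^ 2) end.

Lemma uu_prod (w a b : nat -> R) i j (Icc Ics Isc Iss : R) :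
  is_RInt (fun x => cos (w i * x) * cos (w j * x)) 0 1 Icc ->
  is_RInt (fun x => cos (w i * x) * sin (w j * x)) 0 1 Ics ->
  is_RInt (fun x => sin (w i * x) * cos (w j * x)) 0 1 Isc ->
  is_RInt (fun x => sin (w i * x) * sin (w j * x)) 0 1 Iss ->
  is_RInt (fun x => uf w a b i x * uf w a b j x) 0 1
    (4 * (a i * a j * Icc + a i * b j * Ics + b i * a j * Isc + b i * b j * Iss)).
Proof.
  intros H1 H2 H3 H4.
  apply (RI_eq _ _ 0 1 _ _ (lin4 _ _ _ _ _ _ _ _ (4 * (a i * a j)) (4 * (a i * b j)) (4 * (b i * a j)) (4 * (b i * b j)) H1 H2 H3 H4)).
  - intros x. unfold uf. ring.
  - ring.
Qed.

Lemma uu (w a b : nat -> R) :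
  (forall i, 0 < w i) -> (forall i, sin (w i) = 0) -> (forall i, cos (w i) = 1) ->
  (forall i j, i <> j -> w i <> w j) ->
  forall i j, is_RInt (fun x => uf w a b i x * uf w a b j x) 0 1
    (if Nat.eqb i j then 2 * (a i ^ 2 + b i ^ 2) else 0).
Proof.
  intros Hw Hs Hc Hinj i j.
  destruct (Nat.eqb_spec i j) as [<-|Hij].
  - assert (Hcs : is_RInt (fun x => cos (w i * x) * sin (w i * x)) 0 1 0).
    { apply (RI_eq (fun x => sin (w i * x) * cos (w i * x)) _ 0 1 0 0 (O4m _ (Hw i) (Hs i))).
      intros; ring. reflexivity. }
    apply (RI_eq _ _ 0 1 _ _ (uu_prod w a b i i _ _ _ _ (O4c _ (Hw i) (Hs i))
       Hcs (O4m _ (Hw i) (Hs i)) (O4s _ (Hw i) (Hs i)))).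
    + intros; reflexivity.
    + field.
  - assert (Hcs : is_RInt (fun x => cos (w i * x) * sin (w j * x)) 0 1 0).
    { apply (RI_eq (fun x => sin (w j * x) * cos (w i * x)) _ 0 1 0 0
        (O3 _ _ (Hw j) (Hw i) (Hinj j i (not_eq_sym Hij)) (Hs j) (Hs i) (Hc j) (Hc i))).
      intros; ring. reflexivity. }
    apply (RI_eq _ _ 0 1 _ _ (uu_prod w a b i j _ _ _ _ (O1 _ _ (Hw i) (Hw j) (Hinj i j Hij) (Hs i) (Hs j))
       Hcs
       (O3 _ _ (Hw i) (Hw j) (Hinj i j Hij) (Hs i) (Hs j) (Hc i) (Hc j))
       (O2 _ _ (Hw i) (Hw j) (Hinj i j Hij) (Hs i) (Hs j)))).
    + intros; reflexivity.
    + ring.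
Qed.

Lemma RI_zero : is_RInt (fun _ => 0) 0 1 0.
Proof.
  apply (RI_der (fun _ => 0)).
  - intro t. auto_derive; [exact I | reflexivity].
  - intro t. apply cont_of_der. auto_derive. exact I.
  - ring.
Qed.

Lemma Tu (w a b : nat -> R) :
  (forall i, 0 < w i) -> (forall i, sin (w i) = 0) -> (forall i, cos (w i) = 1) ->
  (forall i j, i <> j -> w i <> w j) ->
  forall N j, (N <= j)%nat -> is_RInt (fun x => Tn w a b N x * uf w a b j x) 0 1 0.
Proof.
  intros Hw Hs Hc Hinj N. induction N as [|N IH]; intros j Hj.
  - simpl. apply (RI_eq (fun _ => 0) _ 0 1 0 0 RI_zero).
    + intros; ring.
    + reflexivity.
  - simpl. assert (H1 := IH j ltac:(lia)). assert (H2 := uu w a b Hw Hs Hc Hinj N j).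
    rewrite (proj2 (Nat.eqb_neq N j) ltac:(lia)) in H2.
    apply (RI_eq _ _ 0 1 _ _ (RI_lin _ _ 0 1 _ _ 1 1 H1 H2)).
    + intros; ring.
    + ring.
Qed.

Lemma fT (f : R -> R) (w a b : nat -> R) :
  (forall i, is_RInt (fun x => f x * cos (w i * x)) 0 1 (a i)) ->
  (forall i, is_RInt (fun x => f x * sin (w i * x)) 0 1 (b i)) ->
  forall N, is_RInt (fun x => f x * Tn w a b N x) 0 1 (Sn a b N).
Proof.
  intros Hfc Hfs N. induction N as [|N IH].
  - simpl. apply (RI_eq (fun _ => 0) _ 0 1 0 0 RI_zero).
    + intros; ring.
    + reflexivity.
  - simpl. assert (H2 := RI_lin _ _ 0 1 _ _ (2 * a N) (2 * b N) (Hfc N) (Hfs N)).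
    apply (RI_eq _ _ 0 1 _ _ (RI_lin _ _ 0 1 _ _ 1 1 IH H2)).
    + intros; unfold uf; ring.
    + ring.
Qed.

Lemma TT (w a b : nat -> R) :
  (forall i, 0 < w i) -> (forall i, sin (w i) = 0) -> (forall i, cos (w i) = 1) ->
  (forall i j, i <> j -> w i <> w j) ->
  forall N, is_RInt (fun x => Tn w a b N x * Tn w a b N x) 0 1 (Sn a b N).
Proof.
  intros Hw Hs Hc Hinj N. induction N as [|N IH].
  - simpl. apply (RI_eq (fun _ => 0) _ 0 1 0 0 RI_zero).
    + intros; ring.
    + reflexivity.
  - simpl. assert (H1 := Tu w a b Hw Hs Hc Hinj N N (le_n N)).
    assert (H2 := uu w a b Hw Hs Hc Hinj N N). rewrite Nat.eqb_refl in H2.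
    apply (RI_eq _ _ 0 1 _ _ (RI_lin _ _ 0 1 _ _ 1 1 (RI_lin _ _ 0 1 _ _ 1 2 IH H1) H2)).
    + intros; ring.
    + ring.
Qed.

Lemma bessel (f : R -> R) (w a b : nat -> R) (V : R) :
  (forall i, 0 < w i) -> (forall i, sin (w i) = 0) -> (forall i, cos (w i) = 1) ->
  (forall i j, i <> j -> w i <> w j) ->
  (forall i, is_RInt (fun x => f x * cos (w i * x)) 0 1 (a i)) ->
  (forall i, is_RInt (fun x => f x * sin (w i * x)) 0 1 (b i)) ->
  is_RInt (fun x => f x * f x) 0 1 V ->
  forall N, Sn a b N <= V.
Proof.
  intros Hw Hs Hc Hinj Hfc Hfs HV N.
  assert (H := RI_lin _ _ 0 1 _ _ 1 1 (RI_lin _ _ 0 1 _ _ 1 (-2) HV (fT f w a b Hfc Hfs N))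
                 (TT w a b Hw Hs Hc Hinj N)).
  assert (H' : is_RInt (fun x => (f x - Tn w a b N x) ^ 2) 0 1 (V - Sn a b N)).
  { apply (RI_eq _ _ 0 1 _ _ H). intros; simpl; ring. ring. }
  assert (0 <= V - Sn a b N).
  { apply (is_RInt_ge_0 _ 0 1 _ ltac:(lra) H'). intros x _. apply pow2_ge_0. }
  lra.
Qed.


Definition Pk (k : nat) (c : R) : R := (/ c) ^ k.

Lemma Pk_pos k c : 0 < c -> 0 < Pk k c.
Proof. intros. unfold Pk. apply pow_lt. apply Rinv_0_lt_compat. lra. Qed.

Lemma Pk_mult k a b c : 0 < a -> 0 < b -> a * b = c -> Pk k a * Pk k b = Pk k c.
Proof. intros Ha Hb <-. unfold Pk. rewrite <- Rpow_mult_distr. f_equal. field. lra. Qed.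

Lemma Pk_le k c d : (1 <= k)%nat -> 0 < c -> c <= d -> Pk k d <= Pk k c * (c / d).
Proof.
  intros Hk Hc Hcd. unfold Pk.
  replace (/ d) with (/ c * (c / d)) by (field; lra).
  rewrite Rpow_mult_distr.
  apply Rmult_le_compat_l. { apply pow_le. left. apply Rinv_0_lt_compat. lra. }
  destruct k as [|k]; [lia|]. simpl.
  assert (0 <= c / d <= 1).
  { split. apply Rmult_le_pos; [lra| left; apply Rinv_0_lt_compat; lra]. apply (Rmult_le_reg_r d); [lra|]. field_simplify; lra. }
  assert (0 <= (c / d) ^ k <= 1) by (split; [apply pow_le; lra | rewrite <- (pow1 k); apply pow_incr; lra]).
  nra.
Qed.

Lemma Pk_1 k : Pk k 1 = 1.
Proof. unfold Pk. rewrite Rinv_1. apply pow1. Qed.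

Lemma numeric k : (1 <= k)%nat ->
  / ((1 - Pk k 4) * (1 - Pk k 9)) <
  Pk k 1 + Pk k 4 + Pk k 9 + Pk k 16 + Pk k 25 + Pk k 36 + Pk k 49 + Pk k 64.
Proof.
  intros Hk.
  assert (M : forall a b c, 0 < a -> 0 < b -> a * b = c -> Pk k a * Pk k b = Pk k c)
    by (intros; apply Pk_mult; auto).
  assert (L : forall c d, 0 < c -> c <= d -> Pk k d <= Pk k c * (c / d))
    by (intros; apply Pk_le; auto).
  assert (Pp : forall c, 0 < c -> 0 < Pk k c) by (intros; apply Pk_pos; auto).
  rewrite Pk_1.
  assert (H4 : Pk k 4 <= / 4) by (generalize (L 1 4 ltac:(lra) ltac:(lra)); rewrite Pk_1; lra).
  assert (H9 : Pk k 9 <= / 9) by (generalize (L 1 9 ltac:(lra) ltac:(lra)); rewrite Pk_1; lra).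
  assert (P4 := Pp 4 ltac:(lra)). assert (P9 := Pp 9 ltac:(lra)).
  assert (e1 := M 4 4 16 ltac:(lra) ltac:(lra) ltac:(lra)).
  assert (e2 := M 4 9 36 ltac:(lra) ltac:(lra) ltac:(lra)).
  assert (e3 := M 4 16 64 ltac:(lra) ltac:(lra) ltac:(lra)).
  assert (e4 := M 4 25 100 ltac:(lra) ltac:(lra) ltac:(lra)).
  assert (e5 := M 4 36 144 ltac:(lra) ltac:(lra) ltac:(lra)).
  assert (e6 := M 4 49 196 ltac:(lra) ltac:(lra) ltac:(lra)).
  assert (e7 := M 4 64 256 ltac:(lra) ltac:(lra) ltac:(lra)).
  assert (f1 := M 9 9 81 ltac:(lra) ltac:(lra) ltac:(lra)).
  assert (f2 := M 9 25 225 ltac:(lra) ltac:(lra) ltac:(lra)).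
  assert (f3 := M 9 49 441 ltac:(lra) ltac:(lra) ltac:(lra)).
  assert (f4 := M 9 100 900 ltac:(lra) ltac:(lra) ltac:(lra)).
  assert (f5 := M 9 144 1296 ltac:(lra) ltac:(lra) ltac:(lra)).
  assert (f6 := M 9 196 1764 ltac:(lra) ltac:(lra) ltac:(lra)).
  assert (f7 := M 9 256 2304 ltac:(lra) ltac:(lra) ltac:(lra)).
  assert (g1 := L 49 81 ltac:(lra) ltac:(lra)).
  assert (g2 := L 49 225 ltac:(lra) ltac:(lra)).
  assert (g3 := L 49 441 ltac:(lra) ltac:(lra)).
  assert (g4 := L 25 100 ltac:(lra) ltac:(lra)).
  assert (g5 := L 25 144 ltac:(lra) ltac:(lra)).
  assert (g6 := L 25 196 ltac:(lra) ltac:(lra)).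
  assert (g7 := L 25 256 ltac:(lra) ltac:(lra)).
  assert (p25 := Pp 25 ltac:(lra)). assert (p49 := Pp 49 ltac:(lra)).
  assert (q1 := Pp 900 ltac:(lra)). assert (q2 := Pp 1296 ltac:(lra)).
  assert (q3 := Pp 1764 ltac:(lra)). assert (q4 := Pp 2304 ltac:(lra)).
  set (S := 1 + Pk k 4 + Pk k 9 + Pk k 16 + Pk k 25 + Pk k 36 + Pk k 49 + Pk k 64).
  assert (E1 : (1 - Pk k 4) * S = 1 + Pk k 9 + Pk k 25 + Pk k 49 - Pk k 100 - Pk k 144 - Pk k 196 - Pk k 256).
  { replace ((1 - Pk k 4) * S) with (S - (Pk k 4 * 1 + Pk k 4 * Pk k 4 + Pk k 4 * Pk k 9 + Pk k 4 * Pk k 16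
       + Pk k 4 * Pk k 25 + Pk k 4 * Pk k 36 + Pk k 4 * Pk k 49 + Pk k 4 * Pk k 64)) by (unfold S; ring).
    rewrite e1, e2, e3, e4, e5, e6, e7. unfold S. ring. }
  set (S1 := 1 + Pk k 9 + Pk k 25 + Pk k 49 - Pk k 100 - Pk k 144 - Pk k 196 - Pk k 256) in E1.
  assert (E2 : (1 - Pk k 9) * S1 = 1 + Pk k 25 + Pk k 49 - Pk k 81 - Pk k 100 - Pk k 144 - Pk k 196
      - Pk k 225 - Pk k 256 - Pk k 441 + Pk k 900 + Pk k 1296 + Pk k 1764 + Pk k 2304).
  { replace ((1 - Pk k 9) * S1) with (S1 - (Pk k 9 * 1 + Pk k 9 * Pk k 9 + Pk k 9 * Pk k 25 + Pk k 9 * Pk k 49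
       - Pk k 9 * Pk k 100 - Pk k 9 * Pk k 144 - Pk k 9 * Pk k 196 - Pk k 9 * Pk k 256)) by (unfold S1; ring).
    rewrite f1, f2, f3, f4, f5, f6, f7. unfold S1. ring. }
  assert (D : 0 < (1 - Pk k 4) * (1 - Pk k 9)) by (apply Rmult_lt_0_compat; lra).
  apply (Rmult_lt_reg_l ((1 - Pk k 4) * (1 - Pk k 9))); auto.
  rewrite Rinv_r by lra.
  replace ((1 - Pk k 4) * (1 - Pk k 9) * S) with ((1 - Pk k 9) * ((1 - Pk k 4) * S)) by ring.
  rewrite E1, E2. lra.
Qed.


Fixpoint Gs (k N : nat) : R :=
  match N with O => 0 | S N' => Gs k N' + 2 * / wm (S N') ^ (2 * k) end.

Lemma Sn_Gs k N : (1 <= k)%nat ->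
  Sn (fun i => fst (CS (wm (S i)) k)) (fun i => snd (CS (wm (S i)) k)) N = Gs k N.
Proof.
  intros Hk. induction N as [|N IH]; [reflexivity|].
  cbn [Sn Gs]. rewrite IH, CS_norm; auto.
  apply Rgt_not_eq, wm_pos. lia.
Qed.

Lemma wm_term k m c : INR m * INR m = c -> 0 < c ->
  2 * / wm m ^ (2 * k) = 2 * Pk k 4 / PI ^ (2 * k) * Pk k c.
Proof.
  intros Hc Hpos. unfold wm, Pk.
  assert (HP : 0 < PI) by apply PI_RGT_0.
  rewrite !pow_inv.
  rewrite !Rpow_mult_distr.
  replace (2 ^ (2 * k)) with (4 ^ k) by (rewrite pow_mult; f_equal; ring).
  replace (INR m ^ (2 * k)) with (c ^ k) by (rewrite pow_mult, <- Hc; f_equal; ring).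
  assert (4 ^ k <> 0) by (apply pow_nonzero; lra).
  assert (c ^ k <> 0) by (apply pow_nonzero; lra).
  assert (PI ^ (2 * k) <> 0) by (apply pow_nonzero; lra).
  field. repeat split; auto.
Qed.

Theorem corollary2p4 (a : R) (k : nat) (ha : 3 <= a) (hk : (1 <= k)%nat) :
  2 * INR (Factorial.fact (2 * k)) / (PI ^ (2 * k) * (2 ^ (2 * k) - 1))
    * (a ^ (2 * k) / (a ^ (2 * k) - 1))
  < Rabs (bernoulli (2 * k)).
Proof.
  destruct k as [|q]; [lia|].
  set (k := S q).
  set (w := fun i => wm (S i)).
  set (aa := fun i => fst (CS (w i) k)).
  set (bb := fun i => snd (CS (w i) k)).
  assert (HV := QQ q k ltac:(unfold k; lia)).
  assert (B := bessel (Q k) w aa bb _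
     (fun i => wm_pos (S i) ltac:(lia)) (fun i => sin_wm (S i)) (fun i => cos_wm (S i))
     ltac:(intros i j Hij E; apply Hij; unfold w, wm in E;
           assert (PI > 0) by apply PI_RGT_0;
           apply (Rmult_eq_reg_l (2 * PI)) in E; [|lra]; apply INR_eq in E; lia)
     (fun i => proj1 (CS_int (S i) k ltac:(lia))) (fun i => proj2 (CS_int (S i) k ltac:(lia)))
     HV 8).
  unfold aa, bb, w in B. rewrite Sn_Gs in B by (unfold k; lia).
  replace (k + S q)%nat with (2 * k)%nat in B by (unfold k; lia).
  assert (Hab : (-1) ^ q * cc (2 * k) <= Rabs (cc (2 * k))).
  { eapply Rle_trans; [apply Rle_abs|]. rewrite Rabs_mult, pow_1_abs. lra. }
  cbn [Gs] in B.
  rewrite (wm_term k 1 1) in B by (simpl; lra).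
  rewrite (wm_term k 2 4) in B by (simpl; lra).
  rewrite (wm_term k 3 9) in B by (simpl; lra).
  rewrite (wm_term k 4 16) in B by (simpl; lra).
  rewrite (wm_term k 5 25) in B by (simpl; lra).
  rewrite (wm_term k 6 36) in B by (simpl; lra).
  rewrite (wm_term k 7 49) in B by (simpl; lra).
  rewrite (wm_term k 8 64) in B by (simpl; lra).
  assert (Nm := numeric k ltac:(unfold k; lia)).
  set (P4 := Pk k 4) in *. set (P9 := Pk k 9) in *.
  set (S8 := Pk k 1 + P4 + P9 + Pk k 16 + Pk k 25 + Pk k 36 + Pk k 49 + Pk k 64) in *.
  set (T := PI ^ (2 * k)) in *.
  assert (HT : 0 < T) by (apply pow_lt, PI_RGT_0).
  assert (HB : 2 * P4 / T * S8 <= Rabs (cc (2 * k))).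
  { eapply Rle_trans; [|exact Hab]. eapply Rle_trans; [|exact B]. unfold S8. right. ring. }
  rewrite bernoulli_cc, Rabs_mult.
  set (F := INR (fact (2 * k))).
  assert (HF : 0 < F) by (apply lt_0_INR, lt_O_fact).
  rewrite (Rabs_right F) by lra.
  assert (HP4 : 0 < P4) by (apply Pk_pos; lra).
  assert (HP9 : 0 < P9) by (apply Pk_pos; lra).
  assert (HX : 2 ^ (2 * k) = / P4).
  { unfold P4, Pk. rewrite pow_inv, Rinv_inv, pow_mult. f_equal. ring. }
  assert (HP41 : P4 < 1).
  { unfold P4, Pk. rewrite pow_inv. rewrite <- Rinv_1. apply Rinv_lt_contravar.
    - rewrite Rmult_1_l. apply pow_lt; lra.
    - apply (Rlt_le_trans _ (4 ^ 1)); [simpl; lra|]. apply Rle_pow; [lra| unfold k; lia]. }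
  assert (HP91 : P9 < 1).
  { unfold P9, Pk. rewrite pow_inv. rewrite <- Rinv_1. apply Rinv_lt_contravar.
    - rewrite Rmult_1_l. apply pow_lt; lra.
    - apply (Rlt_le_trans _ (9 ^ 1)); [simpl; lra|]. apply Rle_pow; [lra| unfold k; lia]. }
  assert (HA : / P9 <= a ^ (2 * k)).
  { unfold P9, Pk. rewrite pow_inv, Rinv_inv, pow_mult. apply pow_incr. nra. }
  set (A := a ^ (2 * k)) in *.
  assert (HA1 : 1 < A).
  { apply (Rlt_le_trans _ (/ P9)); auto. rewrite <- Rinv_1. apply Rinv_lt_contravar; lra. }
  assert (HAle : A / (A - 1) <= / (1 - P9)).
  { apply (Rmult_le_reg_r ((A - 1) * (1 - P9))). { apply Rmult_lt_0_compat; lra. }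
    field_simplify; try lra.
    assert (1 <= P9 * A) by (apply (Rmult_le_reg_l (/ P9)); [apply Rinv_0_lt_compat; lra|];
       field_simplify; lra).
    nra. }
  rewrite HX.
  assert (E : 2 * F / (T * (/ P4 - 1)) = F * (2 * P4 / T) / (1 - P4)).
  { field. repeat split; lra. }
  rewrite E.
  assert (K : 0 < F * (2 * P4 / T) / (1 - P4)).
  { apply Rmult_lt_0_compat; [apply Rmult_lt_0_compat; [lra|] |].
    - apply Rmult_lt_0_compat; [lra|]. apply Rinv_0_lt_compat; lra.
    - apply Rinv_0_lt_compat; lra. }
  apply (Rle_lt_trans _ (F * (2 * P4 / T) / (1 - P4) * / (1 - P9))).
  { apply Rmult_le_compat_l; lra. }
  apply (Rlt_le_trans _ (F * (2 * P4 / T * S8))).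
  { replace (F * (2 * P4 / T) / (1 - P4) * / (1 - P9)) with
      (F * (2 * P4 / T) * / ((1 - P4) * (1 - P9))) by (field; lra).
    rewrite <- Rmult_assoc. apply Rmult_lt_compat_l; auto.
    apply Rmult_lt_0_compat; [lra|]. apply Rmult_lt_0_compat; [lra|]. apply Rinv_0_lt_compat; lra. }
  apply Rmult_le_compat_l; lra.
Qed.
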